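(* Let $(X,\mathcal{A},\mu)$ be a probability space, $\theta$ a measure-preserving endomorphism, $\varphi$ a bounded ceiling function and $(\overline{X},\overline{\mu},(\Phi_t))$ the associated special flow. Let $A\subset X$ be a hole such that the escape rate $\rho(A,\varphi)$ exists. Then \[\rho(A,\varphi)=\lim_{t\to\infty}-\frac1t\log\overline{\mu}\big(\{(x,s)\in\overline{X}:N_A(x)\ge N_t^\varphi(x)\}\big)=\lim_{t\to\infty}-\frac1t\log\mu\big(\{x\in X:N_A(x)\ge N_t^\varphi(x)\}\big).\]
   Context: A ceiling function is a measurable $\varphi:X\to\mathbb{R}$ with $\inf\varphi>0$. $S_n\varphi=\sum_{k=0}^{n-1}\varphi\circ\theta^k$, $N_t^\varphi(x)=\min\{n\in\mathbb{N}_0:S_n\varphi(x)>t\}$ for $t\ge0$, and $N_A(x)=\min\{n\in\mathbb{N}_0:\theta^n(x)\in A\}$. Special flow: $\overline{X}=\{(x,s):0\le s<\varphi(x)\}$, $\overline{\mu}$ the restriction of $\mu\otimes$Lebesgue; $\Phi_t(x,s)=(x,s+t)$ if $t<\varphi(x)-s$, otherwise $\Phi_t(x,s)=(\theta^{N-1}x,s+t-S_{N-1}\varphi(x))$ with $N=N^\varphi_{s+t}(x)$. $\pi_1$ is the projection to $X$. A hole $A\subset X$ is a measurable set with $\bigcup_{n\ge0}\theta^{-n}(A)=X$ up to a $\mu$-null set. The escape rate $\rho(A,\varphi)$ is $\lim_{t\to\infty}-\frac1t\log\overline{\mu}(\{(x,s):\forall\tau\in[0,t]:\Phi_\tau(x,s)\notin\pi_1^{-1}(A)\})$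 when this limit exists. *)

(* Defs.v *)
From HB Require Import structures.
From mathcomp Require Import all_boot all_order all_algebra.
From mathcomp Require Import all_classical all_reals all_analysis.
Set Implicit Arguments. Unset Strict Implicit. Unset Printing Implicit Defensive.
Import Order.TTheory GRing.Theory Num.Theory.
Local Open Scope classical_set_scope.
Local Open Scope ring_scope.

(* The least natural number satisfying P, or 0 if there is none (junk). *)
Definition least_nat (P : nat -> Prop) : nat :=
  match pselect (exists n, P n) with
  | left h => @ex_minn (fun n => `[< P n >]) (let: ex_intro n Hn := h in
                        ex_intro _ n (asboolT Hn))
  | right _ => 0%N
  end.

Section SpecialFlow.
Context {d : measure_display} {X : measurableType d} {R : realType}.

Definition birkhoff (theta : X -> X) (phi : X -> R) (n : nat) (x : X) : R :=
  \sum_(k < n) phi (iter k theta x).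

Definition Nphi (theta : X -> X) (phi : X -> R) (t : R) (x : X) : nat :=
  least_nat (fun n => t < birkhoff theta phi n x).

Definition NA (theta : X -> X) (A : set X) (x : X) : \bar R :=
  if `[< exists n, A (iter n theta x) >]
  then ((least_nat (fun n => A (iter n theta x)))%:R)%:E
  else +oo%E.

Definition Xbar (phi : X -> R) : set (X * R) :=
  [set p | 0 <= p.2 /\ p.2 < phi p.1].

Definition sflow (theta : X -> X) (phi : X -> R) (t : R) (p : X * R) : X * R :=
  let: (x, s) := p in
  if t < phi x - s then (x, s + t)
  else let N := Nphi theta phi (s + t) x in
       (iter N.-1 theta x, s + t - birkhoff theta phi N.-1 x).

Definition mubar (mu : set X -> \bar R) (phi : X -> R) (B : set (X * R)) : \bar R :=
  (mu \x (@lebesgue_measure R))%E (B `&` Xbar phi).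

Definition survivor (theta : X -> X) (phi : X -> R) (A : set X) (t : R)
  : set (X * R) :=
  [set p | Xbar phi p /\ forall tau, 0 <= tau <= t -> ~ A (sflow theta phi tau p).1].

(* the function t |-> -(1/t) log m(t), with the convention -log 0 = +oo *)
Definition neglograte (m : R -> \bar R) (t : R) : \bar R :=
  if m t == 0%E then +oo%E else (- (ln (fine (m t)) / t))%:E.

Definition is_hole (mu : set X -> \bar R) (theta : X -> X) (A : set X) : Prop :=
  measurable A /\ mu (~` \bigcup_n ((iter n theta) @^-1` A)) = 0%E.

Definition measure_preserving (mu : set X -> \bar R) (theta : X -> X) : Prop :=
  measurable_fun setT theta /\
  forall B, measurable B -> mu (theta @^-1` B) = mu B.

Definition ceiling_function (phi : X -> R) : Prop :=
  measurable_fun setT phi /\ exists c : R, 0 < c /\ forall x, c <= phi x.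

End SpecialFlow.

(* Main.v *)
Require Import Defs.
From HB Require Import structures.
From mathcomp Require Import all_boot all_order all_algebra.
From mathcomp Require Import all_classical all_reals all_analysis.
From mathcomp Require Import measurable_realfun.
From mathcomp Require Import lra ring.
Import Order.TTheory GRing.Theory Num.Theory.
Import numFieldNormedType.Exports.
Local Open Scope classical_set_scope.
Local Open Scope ring_scope.


Lemma least_natP (P : nat -> Prop) : (exists n, P n) ->
  P (least_nat P) /\ forall m, P m -> (least_nat P <= m)%N.
Proof.
move=> ex; rewrite /least_nat; case: pselect => // h.
case: (ex_minnP _) => n /asboolP Pn Hmin; split => // m Pm.
by apply: Hmin; apply/asboolP.
Qed.

Lemma least_nat_lt (P : nat -> Prop) m : (m < least_nat P)%N -> ~ P m.
Proof.
move=> lt Pm.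
have [_ /(_ m Pm)] := @least_natP P (ex_intro _ m Pm).
by rewrite leqNgt lt.
Qed.

Section Birk.
Context {d : measure_display} {X : measurableType d} {R : realType}.
Variables (theta : X -> X) (phi : X -> R) (c : R).
Hypothesis c0 : 0 < c.
Hypothesis hc : forall x, c <= phi x.

Lemma birkhoffS n x : birkhoff theta phi n.+1 x = birkhoff theta phi n x + phi (iter n theta x).
Proof. by rewrite /birkhoff big_ord_recr. Qed.

Lemma birkhoff0 x : birkhoff theta phi 0 x = 0.
Proof. by rewrite /birkhoff big_ord0. Qed.

Lemma birkhoff1 x : birkhoff theta phi 1 x = phi x.
Proof. by rewrite birkhoffS birkhoff0 add0r. Qed.

Lemma birkhoff_ge n x : n%:R * c <= birkhoff theta phi n x.
Proof.
elim: n => [|n IH]; first by rewrite birkhoff0 mul0r.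
by rewrite birkhoffS -nat1r mulrDl mul1r addrC lerD.
Qed.

Lemma birkhoff_le m n x : (m <= n)%N -> birkhoff theta phi m x <= birkhoff theta phi n x.
Proof.
elim: n => [|n IH]; first by rewrite leqn0 => /eqP ->.
rewrite leq_eqVlt => /orP [/eqP -> //|]; rewrite ltnS => /IH H.
by rewrite birkhoffS (le_trans H) // lerDl (le_trans _ (hc _)) // ltW.
Qed.

Lemma birkhoff_lt m n x : (m < n)%N -> birkhoff theta phi m x < birkhoff theta phi n x.
Proof.
move=> mn; apply: (lt_le_trans _ (birkhoff_le _ _ x mn)).
by rewrite birkhoffS ltrDl (lt_le_trans c0 (hc _)).
Qed.

Lemma Nphi_ex t x : exists n, t < birkhoff theta phi n x.
Proof.
have [n hn] : exists n : nat, t / c < n%:R.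
  exists (Num.trunc (`|t| / c)).+1.
  apply: (le_lt_trans (y := `|t| / c)); first by rewrite ler_pM2r ?invr_gt0 // ler_norm.
  by rewrite truncnS_gt // divr_ge0 // ltW.
exists n; apply: (lt_le_trans _ (birkhoff_ge n x)).
by rewrite -ltr_pdivrMr.
Qed.

Lemma NphiP t x : t < birkhoff theta phi (Nphi theta phi t x) x /\
   forall m, t < birkhoff theta phi m x -> (Nphi theta phi t x <= m)%N.
Proof. exact: (@least_natP (fun n => t < birkhoff theta phi n x) (Nphi_ex t x)). Qed.

End Birk.



Section G.
Context {d : measure_display} {X : measurableType d} {R : realType}.
Variables (theta : X -> X) (phi : X -> R) (c : R) (A : set X).
Hypothesis c0 : 0 < c.
Hypothesis hc : forall x, c <= phi x.
Let NphiP' := NphiP theta phi c c0 hc.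
Let ble := birkhoff_le theta phi c c0 hc.
Let blt := birkhoff_lt theta phi c c0 hc.

Definition Gs (t : R) : set X :=
  [set x | forall n, birkhoff theta phi n x <= t -> ~ A (iter n theta x)].

Lemma GsE t x : ((Nphi theta phi t x)%:R%:E <= NA (R:=R) theta A x)%E <-> Gs t x.
Proof.
have [NP Nmin] := NphiP' t x.
rewrite /NA; case: asboolP => [ex|nex]; last first.
  split => [_ n _ An|_]; [apply: nex; by exists n | exact: leey].
have [LA Lmin] := @least_natP (fun n => A (iter n theta x)) ex.
rewrite lee_fin ler_nat; split.
- move=> le n Sn An.
  have := Lmin n An => Ln.
  have := ble _ _ x (leq_trans le Ln).
  by move=> H; move: (lt_le_trans NP H); rewrite ltNge Sn.
- move=> HG; apply: Nmin; rewrite ltNge; apply/negP => H.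
  exact: (HG _ H LA).
Qed.

Lemma Gs_mono t t' : t <= t' -> Gs t' `<=` Gs t.
Proof. by move=> tt' x Hx n Sn; apply: Hx; apply: le_trans tt'. Qed.

Lemma surv_sub t p : survivor theta phi A t p -> Xbar phi p /\ Gs t p.1.
Proof.
case: p => x s [[s0 sphi] Hs]; split; first by [].
rewrite /= in s0 sphi *; move=> n Sn An.
case: n Sn An => [|n] Sn An.
  rewrite birkhoff0 in Sn.
  have := Hs 0; rewrite lexx Sn /sflow subr_gt0 sphi /=.
  by move=> /(_ isT).
have hpos : 0 <= birkhoff theta phi n.+1 x - s.
  rewrite subr_ge0 ltW // (lt_le_trans sphi) // -(birkhoff1 theta).
  exact: ble.
have := Hs (birkhoff theta phi n.+1 x - s).
rewrite hpos /= (le_trans _ Sn); last by rewrite lerBlDr lerDl.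
move=> /(_ isT); rewrite /sflow.
have -> : (birkhoff theta phi n.+1 x - s < phi x - s) = false.
  apply/negbTE; rewrite -leNgt lerB // -(birkhoff1 theta); exact: ble.
rewrite addrC subrK.
have -> : Nphi theta phi (birkhoff theta phi n.+1 x) x = n.+2.
  have [NP Nmin] := NphiP' (birkhoff theta phi n.+1 x) x.
  apply/eqP; rewrite eqn_leq; apply/andP; split.
    by apply: Nmin; apply: blt.
  rewrite ltnNge; apply/negP => H.
  by move: (ble _ _ x H); rewrite leNgt NP.
by [].
Qed.

Lemma surv_sup t M : (forall x, phi x <= M) -> forall p,
  Xbar phi p -> Gs (t + M) p.1 -> survivor theta phi A t p.
Proof.
move=> hM [x s] [s0 sphi] HG; split => // tau /andP [tau0 taut].
rewrite /sflow; case: ifP => _ /=.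
  apply: (HG 0); rewrite birkhoff0 addr_ge0 //.
  exact: le_trans tau0 taut. exact: le_trans (ltW (lt_le_trans c0 (hc x))) (hM x).
apply: HG.
set N := Nphi theta phi (s + tau) x.
have [NP Nmin] := NphiP' (s + tau) x.
have H1 : birkhoff theta phi N.-1 x <= s + tau.
  case: (posnP N) => [-> |Np]; first by rewrite birkhoff0 addr_ge0.
  rewrite leNgt; apply/negP => /Nmin.
  by rewrite -/N leqNgt ltn_predL Np.
apply: (le_trans H1); rewrite addrC lerD //; exact: le_trans (ltW sphi) (hM x).
Qed.

End G.


Section M.
Context {d : measure_display} {X : measurableType d} {R : realType}.
Variable (mu : {measure set X -> \bar R}).

Lemma leb_mono (B B' : set R) : B `<=` B' -> (@lebesgue_measure R B <= lebesgue_measure B')%E.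
Proof.
move=> BB'. rewrite /lebesgue_measure /lebesgue_stieltjes_measure /measure_extension.
exact: le_mu_ext.
Qed.

Lemma mubar_le (phi : X -> R) B B' : B `&` Xbar phi `<=` B' -> (mubar mu phi B <= mubar mu phi B')%E.
Proof.
move=> BB'; rewrite /mubar /product_measure1.
rewrite !ge0_integralTE //.
apply: le_ereal_sup => _ [h hle <-]; exists h => //= x.
apply: (le_trans (hle x)) => /=; apply: leb_mono => y.
rewrite /xsection /= !inE => -[? ?]; split => //; exact: BB'.
Qed.

End M.


Section M.
Context {d : measure_display} {X : measurableType d} {R : realType}.
Variable (mu : {measure set X -> \bar R}).
Variable (phi : X -> R).
Hypothesis mphi : measurable_fun setT phi.
Hypothesis phi0 : forall x, 0 <= phi x.

Lemma mubar_lift (S : set X) :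
  mubar mu phi [set p | S p.1] = (\int[mu]_x (phi x * \1_S x)%:E)%E.
Proof.
rewrite /mubar /product_measure1; apply: eq_integral => x _ /=.
have [Sx|nSx] := pselect (S x).
  rewrite indicE mem_set // mulr1.
  rewrite (_ : xsection _ x = [set` `[0, phi x[%R]).
    rewrite lebesgue_measure_itv /= lte_fin; case: ltP => h; first by rewrite oppr0 adde0.
    by apply/eqP; rewrite eq_sym eqe eq_le h phi0.
  apply/seteqP; split => y; rewrite /xsection /= inE /=.
    by move=> [_ [h1 h2]]; rewrite in_itv /= h1 h2.
  by rewrite in_itv /= => /andP [h1 h2].
rewrite indicE memNset // mulr0.
rewrite (_ : xsection _ x = set0) ?measure0 //.
by apply/seteqP; split => y; rewrite /xsection /= inE // => -[].
Qed.

Lemma mubar_lift_bounds (S : set X) (c M : R) : measurable S -> 0 <= c ->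
  (forall x, c <= phi x) -> (forall x, phi x <= M) ->
  (c%:E * mu S <= mubar mu phi [set p | S p.1] <= M%:E * mu S)%E.
Proof.
move=> mS c0 hc hM; rewrite mubar_lift.
have mI : measurable_fun setT (\1_S : X -> R) by exact: measurable_indic.
have eqk : forall k : R, 0 <= k -> (\int[mu]_x (k * \1_S x)%:E = k%:E * mu S)%E.
  move=> k k0; under eq_integral do rewrite EFinM.
  by rewrite ge0_integralZl_EFin // ?integral_indic ?setIT //; apply/measurable_EFinP.
have mphiI : measurable_fun setT (fun x => (phi x * \1_S x)%:E).
  by apply/measurable_EFinP; apply: measurable_funM.
apply/andP; split.
  rewrite -eqk //; apply: ge0_le_integral => //.
  - by move=> x _; rewrite lee_fin mulr_ge0.
  - by apply/measurable_EFinP; apply: measurable_funM.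
  - by move=> x _; rewrite lee_fin ler_wpM2r.
rewrite -eqk; last by apply: le_trans (c0) (le_trans (hc point) _).
apply: ge0_le_integral => //.
- by move=> x _; rewrite lee_fin mulr_ge0.
- by apply/measurable_EFinP; apply: measurable_funM.
- by move=> x _; rewrite lee_fin ler_wpM2r.
Qed.

End M.


Section Meas.
Context {d : measure_display} {X : measurableType d} {R : realType}.
Variables (theta : X -> X) (phi : X -> R) (A : set X).
Hypothesis mtheta : measurable_fun setT theta.
Hypothesis mphi : measurable_fun setT phi.
Hypothesis mA : measurable A.

Lemma measurable_iter n : measurable_fun setT (iter n theta).
Proof.
elim: n => [|n IH] /=; first exact: measurable_id.
exact: measurableT_comp.
Qed.

Lemma measurable_birkhoff n : measurable_fun setT (birkhoff theta phi n).
Proof.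
elim: n => [|n IH].
  rewrite (_ : birkhoff theta phi 0 = cst 0); first exact: measurable_cst.
  by apply/funext => x; rewrite birkhoff0.
rewrite (_ : birkhoff theta phi n.+1 = birkhoff theta phi n \+ (phi \o iter n theta)).
  apply: measurable_funD => //; apply: measurableT_comp => //; exact: measurable_iter.
by apply/funext => x; rewrite birkhoffS.
Qed.

Lemma measurable_Gs t : measurable (Gs theta phi A t).
Proof.
rewrite (_ : Gs theta phi A t = \bigcap_n ([set x | t < birkhoff theta phi n x] `|`
   (iter n theta @^-1` (~` A)))).
  apply: bigcapT_measurable => n; apply: measurableU.
    rewrite (_ : [set x | t < birkhoff theta phi n x] =
       [set: X] `&` (birkhoff theta phi n @^-1` `]t, +oo[)).
      by apply: (measurable_birkhoff n) => //; exact: measurable_itv.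
    by apply/seteqP; split => x /=; rewrite in_itv /= andbT; [move=> h; split | case].
  rewrite -[X in measurable X]setTI.
  by apply: (measurable_iter n) => //; exact: measurableC.
apply/seteqP; split => x /=.
  move=> H n _ /=; case: (ltP t (birkhoff theta phi n x)) => h; [by left|right].
  exact: H.
move=> H n Sn An; case: (H n I) => /=; [by rewrite ltNge Sn | by []].
Qed.

End Meas.


Section Rate.
Context {R : realType}.

Lemma inv_cvg0 (k : R) : (fun t => k / t) @ +oo --> 0.
Proof.
have H : (fun t : R => t^-1) @ +oo --> 0.
  have := @gtr0_cvgV0 R R (pinfty_nbhs R) _ (fun t : R => t) (nbhs_pinfty_gt (num_real 0)).
  by move=> [_ ]; apply; exact: cvg_id.
have := cvgM (cvg_cst k) H; rewrite mulr0.
by move=> H2; exact: H2.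
Qed.

Lemma rate_transfer (f g : R -> \bar R) (a b M rho : R) :
  0 < a -> 0 < b ->
  (forall t, (0 <= f t)%E) -> (forall t, f t \is a fin_num) ->
  (forall t, (a%:E * f t <= g t)%E) -> (forall t, (g t <= b%:E * f (t - M)%R)%E) ->
  neglograte f t @[t --> +oo] --> rho%:E ->
  neglograte g t @[t --> +oo] --> rho%:E.
Proof.
move=> a0 b0 f0 ffin hl hu /fine_cvgP [fnear ucvg].
set u := fine \o neglograte f in ucvg.
have [t0 [_ Ht0]] := fnear.
have fne0 t : t0 < t -> f t != 0%E.
  move=> /Ht0; rewrite /neglograte; case: eqP => //.
have uE t : t0 < t -> u t = - (ln (fine (f t)) / t).
  by move=> /fne0 h; rewrite /u /= /neglograte (negbTE h).
pose l t := u (t - M) * (1 - M / t) - ln b / t.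
pose h t := u t - ln a / t.
apply: (@squeeze_cvge _ _ _ _ (fun t => (l t)%:E) _ (fun t => (h t)%:E)).
- exists (`|t0| + `|M| + 1); split; first exact: num_real.
  move=> t Tt.
  have := ler_norm t0; have := ler_norm M; have := normr_ge0 t0; have := normr_ge0 M => *.
  have t0t : t0 < t by lra.
  have t0tM : t0 < t - M by lra.
  have tpos : 0 < t by lra.
  have tMpos : 0 < t - M by lra.
  have [F fE] : exists F, f t = F%:E by move: (ffin t); case: (f t) => // r _; exists r.
  have [F' fE'] : exists F, f (t - M) = F%:E by move: (ffin (t - M)); case: (f (t - M)) => // r _; exists r.
  have Fpos : 0 < F.
    have := f0 t; have := fne0 t t0t; rewrite fE lee_fin eqe lt_def => -> -> //.
  have F'pos : 0 < F'.
    have := f0 (t - M); have := fne0 _ t0tM; rewrite fE' lee_fin eqe lt_def => -> -> //.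
  have := hl t; have := hu t; rewrite fE fE' -!EFinM.
  rewrite /neglograte; case gE : (g t) => [r| |] hr1 hr2; last 2 first.
    by move: hr1; rewrite leye_eq.
    by move: hr2; rewrite leeNy_eq.
  rewrite !lee_fin in hr1 hr2.
  have rpos : 0 < r by apply: lt_le_trans hr2; rewrite mulr_gt0.
  rewrite eqe (gt_eqF rpos) /= !lee_fin.
  have ul := uE _ t0tM; have uh := uE _ t0t.
  rewrite fE' /= in ul; rewrite fE /= in uh.
  rewrite /l /h ul uh.
  have L1 : ln (a * F) <= ln r by rewrite ler_ln // posrE mulr_gt0.
  have L2 : ln r <= ln (b * F') by rewrite ler_ln // posrE mulr_gt0.
  rewrite lnM ?posrE // in L1; rewrite lnM ?posrE // in L2.
  have ti : 0 < t^-1 by rewrite invr_gt0.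
  have -> : - (ln F' / (t - M)) * (1 - M / t) = - (ln F' / t).
    by field; apply/andP; split; rewrite gt_eqF.
  apply/andP; split; nra.
- apply/fine_cvgP; split; first exact: nearW.
  rewrite /=.
  have H1 : u (t - M) @[t --> +oo] --> rho by rewrite cvg_centerr.
  have := cvgB (cvgM H1 (cvgB (cvg_cst (1 : R)) (inv_cvg0 M))) (inv_cvg0 (ln b)).
  rewrite !subr0 mulr1 => H; exact: H.
- apply/fine_cvgP; split; first exact: nearW.
  have := cvgB ucvg (inv_cvg0 (ln a)); rewrite subr0 => H; exact: H.
Qed.

End Rate.

Theorem lemma3p10 (d : measure_display) (X : measurableType d) (R : realType)
  (mu : probability X R) (theta : X -> X) (phi : X -> R) (A : set X) (rho : R) :
  measure_preserving mu theta ->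
  ceiling_function phi ->
  (exists M : R, forall x, phi x <= M) ->
  is_hole mu theta A ->
  neglograte (fun t => mubar mu phi (survivor theta phi A t)) t
    @[t --> +oo] --> rho%:E ->
  neglograte (fun t => mubar mu phi
      [set p | ((Nphi theta phi t p.1)%:R%:E <= NA (R:=R) theta A p.1)%E]) t
    @[t --> +oo] --> rho%:E /\
  neglograte (fun t => mu
      [set x | ((Nphi theta phi t x)%:R%:E <= NA (R:=R) theta A x)%E]) t
    @[t --> +oo] --> rho%:E.
Proof.
move=> [mth _] [mphi [c [c0 hc]]] [M hM] [mA _] hf.
have M0 : 0 < M by apply: lt_le_trans c0 (le_trans (hc point) (hM point)).
have phi0 : forall x, 0 <= phi x by move=> x; exact: le_trans (ltW c0) (hc x).
set G := Gs theta phi A.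
have mG : forall t, measurable (G t) by move=> t; exact: measurable_Gs.
have E1 : forall t, [set p : X * R | ((Nphi theta phi t p.1)%:R%:E <= NA (R:=R) theta A p.1)%E]
    = [set p | G t p.1].
  by move=> t; apply/seteqP; split => p /=; rewrite (GsE theta phi c A c0 hc).
have E2 : forall t, [set x | ((Nphi theta phi t x)%:R%:E <= NA (R:=R) theta A x)%E] = G t.
  by move=> t; apply/seteqP; split => x /=; rewrite (GsE theta phi c A c0 hc).
set f := fun t => mubar mu phi (survivor theta phi A t).
set g := fun t => mubar mu phi [set p | G t p.1].
set h := fun t => mu (G t).
have bnd (t : R) := mubar_lift_bounds mu phi mphi phi0 (G t) c M (mG t) (ltW c0) hc hM.
have f0 t : (0 <= f t)%E.
  by apply: integral_ge0 => x _; exact: measure_ge0.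
have fg t : (f t <= g t)%E.
  apply: mubar_le => p [/(surv_sub theta phi c A c0 hc) [_ ?] _]; exact.
have gf t : (g t <= f (t - M)%R)%E.
  apply: mubar_le => p [Gp Xp]; apply: (surv_sup theta phi c A c0 hc (t - M) M hM) => //.
  by rewrite subrK.
have h1 t : (h t <= 1)%E by exact: probability_le1.
have ffin t : f t \is a fin_num.
  rewrite ge0_fin_numE //; apply: (le_lt_trans (fg t)).
  have /andP [_ H] := bnd t; apply: (le_lt_trans H).
  apply: (le_lt_trans (y := M%:E)); last exact: ltry.
  rewrite -[leRHS]mule1; apply: lee_wpmul2l; [rewrite lee_fin ltW // | exact: probability_le1].
have hnn t : (0 <= h t)%E by exact: measure_ge0.
split.
- rewrite (_ : (fun t => mubar mu phi _) = g); last by apply/funext => t; rewrite E1.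
  apply: (rate_transfer f g 1 1 M rho) => //.
  + by move=> t; rewrite mul1e.
  + by move=> t; rewrite mul1e.
- rewrite (_ : (fun t => mu _) = h); last by apply/funext => t; rewrite E2.
  apply: (rate_transfer f h M^-1 c^-1 M rho) => //.
  + by rewrite invr_gt0.
  + by rewrite invr_gt0.
  + move=> t; have /andP [_ H] := bnd t.
    have := lee_wpmul2l (x := (M^-1)%:E) _ (le_trans (fg t) H).
    rewrite muleA -EFinM mulVf ?gt_eqF // mul1e; apply; rewrite lee_fin invr_ge0 ltW //.
  + move=> t; have /andP [H _] := bnd t.
    have := lee_wpmul2l (x := (c^-1)%:E) _ (le_trans H (gf t)).
    rewrite muleA -EFinM mulVf ?gt_eqF // mul1e; apply; rewrite lee_fin invr_ge0 ltW //.
Qed.
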